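(* Let $d\ge2$ and $R>0$, and let $P\subseteq R\mathbb{B}_2^d$ be a simple bounded polytope containing the origin in its interior, with polar $P^\circ=\{y:\langle x,y\rangle\le1\ \forall x\in P\}$. Suppose every facet of $P^\circ$ has Euclidean diameter at most $\gamma>0$. Then for every $c\in\mathbb{S}^{d-1}$, every vertex $v^+$ of $P$ maximizing $c^\top x$ and every vertex $v^-$ of $P$ minimizing $c^\top x$, there is no simplex path from $v^+$ to $v^-$ of length less than $(d-1)\big(\frac{2}{R\gamma}-2\big)$.
   Context: Write $P=\{x: a_j^\top x\le 1,\ j\in[n]\}$ as a minimal inequality description. A simplex path of length $k$ from $v^+$ to $v^-$ is a sequence $B^0,\dots,B^k\in\binom{[n]}{d}$ of feasible bases of $P$ (index sets whose constraints are tight at a vertex of $P$ and linearly independent) with $|B^{i-1}\cap B^i|=d-1$ for all $i$, such that $a_j^\top v^+=1$ for all $j\in B^0$ and $a_j^\top v^-=1$ for all $j\in B^k$. Simple means every vertex lies on exactly $d$ facets. *)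

(* Defs.v *)
From mathcomp Require Import all_boot all_order all_algebra.
Set Implicit Arguments. Unset Strict Implicit. Unset Printing Implicit Defensive.
Import Order.TTheory GRing.Theory Num.Theory.
Local Open Scope ring_scope.

Section Polytopes.
Variables (R : rcfType) (d : nat).
Notation vec := 'rV[R]_d.

Definition dotp (x y : vec) : R := \sum_(i < d) x ord0 i * y ord0 i.
Definition enorm (x : vec) : R := Num.sqrt (dotp x x).

Definition inP (n : nat) (a : 'I_n -> vec) (x : vec) : Prop :=
  forall j, dotp (a j) x <= 1.

Definition minimal_desc (n : nat) (a : 'I_n -> vec) : Prop :=
  forall j, exists x : vec, 1 < dotp (a j) x /\ (forall k, k != j -> dotp (a k) x <= 1).

Definition is_vertex (n : nat) (a : 'I_n -> vec) (v : vec) : Prop :=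
  inP a v /\
  forall y z : vec, inP a y -> inP a z ->
    forall t : R, 0 < t -> t < 1 -> v = t *: y + (1 - t) *: z -> y = z.

Definition simple_poly (n : nat) (a : 'I_n -> vec) : Prop :=
  forall v, is_vertex a v -> #|[set j | dotp (a j) v == 1]| = d.

Definition polar (n : nat) (a : 'I_n -> vec) (y : vec) : Prop :=
  forall x, inP a x -> dotp x y <= 1.

(* F is a facet of the convex set K: F is the intersection of K with a supporting
   hyperplane {y : <w,y> = b} (w <> 0) and F has affine dimension d-1, i.e.
   contains d affinely independent points *)
Definition is_facet (K F : vec -> Prop) : Prop :=
  exists (w : vec) (b : R),
    w != 0 /\
    (forall y, K y -> dotp w y <= b) /\
    (forall y, F y <-> (K y /\ dotp w y = b)) /\
    exists p : 'I_d -> vec, (forall i, F (p i)) /\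
      forall lam : 'I_d -> R, \sum_i lam i = 0 -> \sum_i lam i *: p i = 0 ->
        forall i, lam i = 0.

Definition diam_le (F : vec -> Prop) (g : R) : Prop :=
  forall y z, F y -> F z -> enorm (y - z) <= g.

Definition feasible_basis (n : nat) (a : 'I_n -> vec) (B : {set 'I_n}) : Prop :=
  #|B| = d /\
  (exists v, is_vertex a v /\ forall j, j \in B -> dotp (a j) v = 1) /\
  (forall lam : 'I_n -> R, \sum_(j in B) lam j *: a j = 0 -> forall j, j \in B -> lam j = 0).

Definition simplex_path (n : nat) (a : 'I_n -> vec) (vp vm : vec) (k : nat)
    (Bs : nat -> {set 'I_n}) : Prop :=
  (forall i, (i <= k)%N -> feasible_basis a (Bs i)) /\
  (forall i, (1 <= i <= k)%N -> #|Bs i.-1 :&: Bs i| = d.-1) /\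
  (forall j, j \in Bs 0%N -> dotp (a j) vp = 1) /\
  (forall j, j \in Bs k -> dotp (a j) vm = 1).

End Polytopes.

(* Main.v *)
Require Import Defs.
From mathcomp Require Import all_boot all_order all_algebra.
From mathcomp Require Import ring lra zify.
Import Order.TTheory GRing.Theory Num.Theory.
Set Implicit Arguments. Unset Strict Implicit.
Local Open Scope ring_scope.

Section Aux.
Variables (R : rcfType) (d : nat).
Notation vec := 'rV[R]_d.
Implicit Types x y z : vec.

Lemma dotpC x y : dotp x y = dotp y x.
Proof. by rewrite /dotp; apply: eq_bigr => i _; rewrite mulrC. Qed.
Lemma dotpDr x y z : dotp x (y + z) = dotp x y + dotp x z.
Proof. by rewrite /dotp -big_split; apply: eq_bigr => i _; rewrite mxE mulrDr. Qed.
Lemma dotpZr x (s : R) y : dotp x (s *: y) = s * dotp x y.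
Proof. by rewrite /dotp mulr_sumr; apply: eq_bigr => i _; rewrite mxE mulrCA. Qed.
Lemma dotpNr x y : dotp x (- y) = - dotp x y.
Proof. by rewrite -scaleN1r dotpZr mulN1r. Qed.
Lemma dotpBr x y z : dotp x (y - z) = dotp x y - dotp x z.
Proof. by rewrite dotpDr dotpNr. Qed.
Lemma dotp0r x : dotp x 0 = 0.
Proof. by rewrite /dotp big1 // => i _; rewrite mxE mulr0. Qed.
Lemma dotpZl x (s : R) y : dotp (s *: x) y = s * dotp x y.
Proof. by rewrite dotpC dotpZr dotpC. Qed.
Lemma dotpBl x y z : dotp (x - y) z = dotp x z - dotp y z.
Proof. by rewrite dotpC dotpBr !(dotpC z). Qed.
Lemma dotpNl x y : dotp (- x) y = - dotp x y.
Proof. by rewrite dotpC dotpNr dotpC. Qed.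
Lemma dotp_ge0 x : 0 <= dotp x x.
Proof. by apply: sumr_ge0 => i _; rewrite -expr2 sqr_ge0. Qed.
Lemma dotp_eq0 x y : dotp x x = 0 -> dotp x y = 0.
Proof.
move=> H.
have Hs : \sum_(i < d) x ord0 i ^+ 2 = 0.
  by rewrite -[RHS]H /dotp; apply: eq_bigr => j _; rewrite expr2.
have H2 : forall i, x ord0 i ^+ 2 = 0.
  move=> i; apply: (psumr_eq0P (P := xpredT) _ Hs) => // j _; exact: sqr_ge0.
rewrite /dotp big1 // => i _.
have /eqP := H2 i.
by rewrite sqrf_eq0 => /eqP ->; rewrite mul0r.
Qed.

Lemma cs x y : dotp x y <= enorm x * enorm y.
Proof.
rewrite /enorm; have hp := dotp_ge0 x.
case: (eqVneq (dotp x x) 0) => [p0|pn0].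
  by rewrite (dotp_eq0 y p0) p0 sqrtr0 mul0r.
have pp : 0 < dotp x x by rewrite lt_def pn0 hp.
set p := dotp x x in hp pn0 pp *; set r := dotp x y; set q := dotp y y.
have key := dotp_ge0 ((r / p) *: x - y).
have E : dotp ((r / p) *: x - y) ((r / p) *: x - y) = q - r ^+ 2 / p.
  rewrite !(dotpBr, dotpBl, dotpZr, dotpZl) (dotpC y x) -/p -/r -/q.
  by field.
rewrite E subr_ge0 ler_pdivrMr // in key.
have k2 : r ^+ 2 <= p * q by rewrite mulrC.
apply: (le_trans (ler_norm r)).
by rewrite -sqrtr_sqr -sqrtrM // ler_sqrt // mulr_ge0 // dotp_ge0.
Qed.

Lemma enormN x : enorm (- x) = enorm x.
Proof. by rewrite /enorm dotpNl dotpNr opprK. Qed.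

End Aux.
Section Inter.
Local Open Scope nat_scope.

Fixpoint inter (T : finType) (Bs : nat -> {set T}) (s l : nat) : {set T} :=
  if l is lp.+1 then @inter T Bs s lp :&: Bs (s + l) else Bs s.
Arguments inter {T}.

Lemma inter_mem (T : finType) (Bs : nat -> {set T}) s l j :
  j \in inter Bs s l -> forall t, (s <= t <= s + l)%N -> j \in Bs t.
Proof.
elim: l => [|l IH] /=.
  by move=> Hj t; rewrite addn0 -eqn_leq => /eqP <-.
rewrite inE => /andP [Hj Hj'] t /andP [h1 h2].
case: (ltnP t (s + l.+1)) => h3.
  by apply: IH => //; rewrite h1 /=; lia.
by have -> : t = (s + l.+1)%N by lia.
Qed.

Lemma inter_sub (T : finType) (Bs : nat -> {set T}) s l :
  inter Bs s l \subset Bs (s + l).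
Proof. by case: l => [|l] /=; [rewrite addn0 | exact: subsetIr]. Qed.

Lemma inter_card (T : finType) (Bs : nat -> {set T}) (d k : nat) :
  (forall i, (i <= k)%N -> #|Bs i| = d) ->
  (forall i, (1 <= i <= k)%N -> #|Bs i.-1 :&: Bs i| = d.-1) ->
  forall s l, (s + l <= k)%N -> (d - l <= #|inter Bs s l|)%N.
Proof.
move=> Hc Hi s; elim=> [|l IH] Hk /=.
  by rewrite subn0 Hc //; lia.
have IH' := IH ltac:(lia).
have c1 := cardsID (Bs (s + l.+1)) (inter Bs s l).
have c2 := cardsID (Bs (s + l.+1)) (Bs (s + l)).
have c3 : #|Bs (s + l) :&: Bs (s + l.+1)| = d.-1.
  by have := Hi (s + l.+1)%N ltac:(apply/andP; split; lia); rewrite addnS.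
have c4 := Hc (s + l)%N ltac:(lia).
have c5 : (#|inter Bs s l :\: Bs (s + l.+1)| <= #|Bs (s + l) :\: Bs (s + l.+1)|)%N.
  by apply: subset_leq_card; apply: setSD; exact: inter_sub.
lia.
Qed.

Lemma inter_ex (T : finType) (Bs : nat -> {set T}) (d k : nat) :
  (forall i, (i <= k)%N -> #|Bs i| = d) ->
  (forall i, (1 <= i <= k)%N -> #|Bs i.-1 :&: Bs i| = d.-1) ->
  forall s l, (s + l <= k)%N -> (l < d)%N ->
  exists j, forall t, (s <= t <= s + l)%N -> j \in Bs t.
Proof.
move=> Hc Hi s l Hk Hl.
have := @inter_card _ _ _ _ Hc Hi _ _ Hk.
move=> h; have /card_gt0P [j Hj] : (0 < #|inter Bs s l|)%N by lia.
by exists j; apply: (@inter_mem _ _ _ _ _ Hj).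
Qed.
End Inter.
Section NatAux.
Local Open Scope nat_scope.
Lemma inter_ex2 (T : finType) (Bs : nat -> {set T}) (d k : nat) :
  (forall i, i <= k -> #|Bs i| = d) ->
  (forall i, 1 <= i <= k -> #|Bs i.-1 :&: Bs i| = d.-1) ->
  forall s i, s <= i -> i <= k -> i - s < d ->
  exists j, j \in Bs s /\ j \in Bs i.
Proof.
move=> Hc Hi s i h1 h2 h3.
have [j Hj] := @inter_ex _ Bs d k Hc Hi s (i - s) ltac:(lia) h3.
by exists j; split; apply: Hj; apply/andP; split; lia.
Qed.
Lemma nat_a1 i d : 1 < d -> i - (i - d.-1) < d.
Proof. lia. Qed.
Lemma nat_a2 i D m : i <= m.+1 * D -> i - D <= m * D.
Proof. rewrite mulSn; move: (m * D) => M; lia. Qed.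
Lemma nat_a3 k D : 0 < D -> k - D <= k.-1 %/ D * D.
Proof.
move=> D0; have e1 := divn_eq k.-1 D; have e2 := ltn_pmod k.-1 D0.
move: e1 e2; move: (k.-1 %/ D * D) (k.-1 %% D) => Q r; lia.
Qed.
End NatAux.

Section Facet.
Variables (R : rcfType) (d n : nat) (a : 'I_n -> 'rV[R]_d).

Lemma polar_a j : polar a (a j).
Proof. by move=> x Hx; rewrite dotpC; exact: Hx j. Qed.

Lemma facet_bound (gam : R) B w : (0 < d)%N ->
  (forall F, is_facet (polar a) F -> diam_le F gam) -> feasible_basis a B ->
  inP a w -> (forall j, j \in B -> dotp (a j) w = 1) ->
  forall y z, polar a y -> polar a z -> dotp w y = 1 -> dotp w z = 1 ->
  enorm (y - z) <= gam.
Proof.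
move=> d0 Hf [Hc [_ Hli]] Hw Ht y z Hy Hz Hwy Hwz.
apply: (Hf (fun y => polar a y /\ dotp w y = 1)) => //.
have [j0 Hj0] : exists j, j \in B by apply/card_gt0P; rewrite Hc.
exists w, 1; split.
  apply/eqP => w0; have := Ht j0 Hj0; rewrite w0 dotp0r => /eqP.
  by rewrite eq_sym oner_eq0.
split; first by move=> u Hu; exact: Hu w Hw.
split; first by [].
pose f := fun i : 'I_d => enum_val (cast_ord (esym Hc) i) : 'I_n.
have fB : forall i, f i \in B by move=> i; exact: enum_valP.
have finj : injective f by move=> i1 i2 /enum_val_inj /cast_ord_inj.
exists (fun i => a (f i)); split.
  move=> i; split; first exact: polar_a.
  by rewrite dotpC; apply: Ht.
move=> lam _ Hs i.
pose mu := fun j => \sum_(i | f i == j) lam i.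
have E : \sum_(j in B) mu j *: a j = \sum_i lam i *: a (f i).
  rewrite [RHS](partition_big f (fun j => j \in B)) => [|i' _]; last exact: fB.
  apply: eq_bigr => j Hj; rewrite /mu scaler_suml.
  by apply: eq_big => [i'|i' /eqP ->] //.
have := Hli mu; rewrite E Hs => /(_ erefl (f i) (fB i)).
by rewrite /mu (big_pred1 i) // => i'; rewrite (inj_eq finj).
Qed.

End Facet.

Theorem lemma5p4 (R : rcfType) (d n : nat) (a : 'I_n -> 'rV[R]_d) (Rad gam : R) :
  (2 <= d)%N -> 0 < Rad -> 0 < gam ->
  minimal_desc a ->
  simple_poly a ->
  (forall x, inP a x -> enorm x <= Rad) ->
  (exists eps : R, 0 < eps /\ forall x, enorm x < eps -> inP a x) ->
  (forall F, is_facet (polar a) F -> diam_le F gam) ->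
  forall (c vp vm : 'rV[R]_d),
    enorm c = 1 ->
    is_vertex a vp -> (forall x, inP a x -> dotp c x <= dotp c vp) ->
    is_vertex a vm -> (forall x, inP a x -> dotp c vm <= dotp c x) ->
    forall (k : nat) (Bs : nat -> {set 'I_n}),
      simplex_path a vp vm k Bs ->
      (d.-1)%:R * (2 / (Rad * gam) - 2) <= k%:R.
Proof.
move=> d2 Rp gp _ _ Pb [eps [epsp Pint]] Hf c vp vm c1 [vpP _] Hvp [vmP _] Hvm
  k Bs [Hfb [Hcap [H0 Hk]]].
have d0 : (0 < d)%N by lia.
have cc1 : dotp c c = 1.
  by rewrite -(sqr_sqrtr (dotp_ge0 c)) -/(enorm c) c1 expr1n.
pose x0 := (eps / 2) *: c.
have ex0 : enorm x0 = eps / 2.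
  rewrite /enorm /x0 dotpZl dotpZr cc1 mulr1 -expr2 sqrtr_sqr ger0_norm //.
  by rewrite divr_ge0 // ltW.
have cx0 : dotp c x0 = eps / 2 by rewrite dotpZr cc1 mulr1.
have cvp : eps / 2 <= dotp c vp.
  by rewrite -cx0; apply: Hvp; apply: Pint; rewrite ex0; lra.
have cvm : dotp c vm <= - (eps / 2).
  by rewrite -cx0 -dotpNr; apply: Hvm; apply: Pint; rewrite enormN ex0; lra.
have csc : forall u, dotp c u <= enorm u by move=> u; have := cs c u; rewrite c1 mul1r.
have cvpR : dotp c vp <= Rad := le_trans (csc vp) (Pb _ vpP).
have cvmR : - Rad <= dotp c vm.
  by rewrite lerNl -dotpNr; apply: (le_trans (csc _)); rewrite enormN; exact: Pb.
set cp := dotp c vp in cvp cvpR Hvp *; set cm := dotp c vm in cvm cvmR Hvm *.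
have cpp : 0 < cp by lra.
have cmn : cm < 0 by lra.
pose yp := cp^-1 *: c. pose ym := cm^-1 *: c.
have cyp : dotp c yp = cp^-1 by rewrite dotpZr cc1 mulr1.
have cym : dotp c ym = cm^-1 by rewrite dotpZr cc1 mulr1.
have pyp : polar a yp.
  by move=> x Hx; rewrite dotpZr dotpC mulrC ler_pdivrMr // mul1r; exact: Hvp.
have pym : polar a ym.
  by move=> x Hx; rewrite dotpZr dotpC mulrC ler_ndivrMr // mul1r; exact: Hvm.
have vyp : dotp vp yp = 1 by rewrite dotpZr dotpC -/cp mulVf // gt_eqF.
have vym : dotp vm ym = 1 by rewrite dotpZr dotpC -/cm mulVf // lt_eqF.
have dist : forall i, (i <= k)%N -> forall w, inP a w ->
    (forall j, j \in Bs i -> dotp (a j) w = 1) -> forall y z, polar a y -> polar a z ->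
    dotp w y = 1 -> dotp w z = 1 -> dotp c y - dotp c z <= gam.
  move=> i Hi w Hw Ht y z Hy Hz Hwy Hwz; rewrite -dotpBr.
  apply: (le_trans (csc _)).
  exact: (facet_bound d0 Hf (Hfb i Hi) Hw Ht Hy Hz Hwy Hwz).
have inner : forall i, (i <= k)%N -> forall j j', j \in Bs i -> j' \in Bs i ->
    dotp c (a j) - dotp c (a j') <= gam.
  move=> i Hi j j' Hj Hj'.
  have [_ [[v [[vP _] vt]] _]] := Hfb i Hi.
  apply: (dist i Hi v vP vt); try exact: polar_a.
    by rewrite dotpC vt.
  by rewrite dotpC vt.
have Hcard : forall i, (i <= k)%N -> #|Bs i| = d by move=> i h; case: (Hfb i h).
have chain : forall m i, (i <= k)%N -> (i <= m * d.-1)%N -> forall j, j \in Bs i ->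
    dotp c yp - dotp c (a j) <= gam * (1 + m%:R).
  elim=> [|m IH] i Hik Him j Hj.
    have i0 : i = 0%N by apply/eqP; rewrite -leqn0 -(mul0n d.-1).
    subst i; rewrite addr0 mulr1.
    apply: (dist 0%N Hik vp vpP H0) => //; first exact: polar_a.
    by rewrite dotpC H0.
  have [j' [Hj1 Hj2]] := @inter_ex2 _ Bs d k Hcard Hcap (i - d.-1)%N i
    (leq_subr _ _) Hik (nat_a1 i d2).
  have h1 := IH (i - d.-1)%N (leq_trans (leq_subr _ _) Hik) (nat_a2 Him) j' Hj1.
  have h2 := inner i Hik j' j Hj2 Hj.
  have -> : gam * (1 + m.+1%:R) = gam * (1 + m%:R) + gam.
    by rewrite -addn1 natrD; ring.
  lra.
pose D := d.-1.
have D0 : (0 < D)%N by rewrite /D -subn1 subn_gt0.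
pose m := (k.-1 %/ D)%N.
have hm1 : (k - D <= m * D)%N := nat_a3 k D0.
have hm2 : (m * D <= k)%N := leq_trans (leq_divM _ _) (leq_pred k).
have [j' [Hj1 Hj2]] := @inter_ex2 _ Bs d k Hcard Hcap (k - D)%N k
    (leq_subr _ _) (leqnn k) (nat_a1 k d2).
have h1 := chain m (k - D)%N (leq_subr _ _) hm1 j' Hj1.
have h2 : dotp c (a j') - dotp c ym <= gam.
  apply: (dist k (leqnn k) vm vmP Hk) => //; first exact: polar_a.
  by rewrite dotpC Hk.
rewrite cyp in h1; rewrite cym in h2.
have i1 : Rad^-1 <= cp^-1 by rewrite lef_pV2 ?posrE.
have i2 : Rad^-1 <= - cm^-1 by rewrite -invrN lef_pV2 ?posrE; lra.
have key : 2 <= gam * (m%:R + 2) * Rad.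
  rewrite -ler_pdivrMr //.
  have -> : gam * (m%:R + 2) = gam * (1 + m%:R) + gam by ring.
  lra.
apply: (@le_trans _ _ (D%:R * m%:R)).
  apply: ler_wpM2l; first exact: ler0n.
  have : 2 / (Rad * gam) <= m%:R + 2.
    rewrite ler_pdivrMr ?mulr_gt0 //.
    by have -> : (m%:R + 2) * (Rad * gam) = gam * (m%:R + 2) * Rad by ring.
  lra.
by rewrite -natrM ler_nat mulnC.
Qed.
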